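(* Let $r \geq 4$, let $t \geq 1$, and let $H_t$ be a member of the family $\mathcal H_t$ (defined in the context), with vertex sequence $V_0 \subset V_1 \subset \cdots \subset V_t$ and added vertices $v_1,\dots,v_t$. Run the $K_r$-bootstrap process starting from $H_t$. Then: (a) for every vertex $u \in V_{t-2}$ (with $V_{-1} := \emptyset$), the edge $\{u, v_t\}$ is either already present in $H_t$ or becomes active precisely at time $t$; (b) for every $0 \leq s \leq t$, at time $s$ the vertex set $V_s$ spans a complete graph in $\langle H_t \rangle_s$, i.e. $\langle H_t\rangle_s[V_s] \cong K_{r-1+s}$.
   Context: $K_r$-bootstrap percolation: for a graph $G$ on vertex set $[n]$, set $G_0 := G$ and $G_{t+1} := G_t \cup \{e : \exists$ a copy $H$ of $K_r$ with $e \in H \subseteq G_t \cup \{e\}\}$; write $\langle G \rangle_t := G_t$. The family $\mathcal H_t$ ($t \geq 1$) is defined recursively. Let $H_0$ be an $(r-1)$-clique (the body) with vertex set $V_0$, and let $v_0$ be an arbitrary fixed vertex of $V_0$. A graph $H_t \in \mathcal H_t$ has vertex set $V_t := V_{t-1} \cup \{v_t\}$ with a new vertex $v_t$, and satisfies: (i) $H_t[V_{t-1}] = H_{t-1}$ for some $H_{t-1} \in \mathcal H_{t-1}$ (with $\mathcal H_0=\{H_0\}$); (ii) $v_{t-1} \in N(v_t)$; (iii) $|N(v_t)| = r-2$, where $N(v_t) \subseteq V_{t-1}$; (iv) for $t \geq 2$, $N(v_t) \setminus \{v_{t-1}\} \not\subseteq N(v_{t-1})$. For $t=1$ conditions (i)–(iii)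 make $H_1$ the graph $K_r$ minus one edge, and $\mathcal H_1 = \{K_r - e\}$. Such $H_t$ has $r-1+t$ vertices and $\binom{r-1}{2} + t(r-2)$ edges. *)

(* Defs.v *)
From mathcomp Require Import all_boot.
Set Implicit Arguments. Unset Strict Implicit. Unset Printing Implicit Defensive.

(* One round of K_r-bootstrap percolation on vertex set [n] = {0,..,n-1}:
   an edge {x,y} is added if there is a set S of r vertices of [n]
   (a copy of K_r) containing x and y all of whose pairs other than {x,y}
   are already edges. *)
Definition kr_step (r n : nat) (G : nat -> nat -> Prop) : nat -> nat -> Prop :=
  fun x y => G x y \/
    (x <> y /\ x < n /\ y < n /\
     exists S : seq nat,
       [/\ uniq S, size S = r, all (fun v => v < n) S, x \in S & y \in S] /\
       forall a b, a \in S -> b \in S -> a <> b ->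
         G a b \/ (a = x /\ b = y) \/ (a = y /\ b = x)).

Fixpoint kr_boot (r n : nat) (G : nat -> nat -> Prop) (s : nat) : nat -> nat -> Prop :=
  match s with
  | 0 => G
  | s'.+1 => kr_step r n (kr_boot r n G s')
  end.

(* Vertex labelling of H_t: V_0 = {0,..,r-2} (the body, an (r-1)-clique),
   v_0 = v0 (a fixed vertex of V_0), and v_s = r-2+s for s >= 1,
   so that V_s = {0,..,r-2+s}. *)
Definition vtx (r v0 s : nat) : nat := if s is 0 then v0 else r - 2 + s.

(* The graph H_t determined by the back-neighbourhoods N s = N(v_s) (s = 1..t). *)
Definition Hgraph (r t : nat) (N : nat -> nat -> bool) : nat -> nat -> Prop :=
  fun x y =>
    (x <> y /\ x < r - 1 /\ y < r - 1) \/
    (exists s, [/\ 1 <= s, s <= t &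
                 (x = r - 2 + s /\ N s y) \/ (y = r - 2 + s /\ N s x)]).

Definition in_family (r t v0 : nat) (N : nat -> nat -> bool) : Prop :=
  v0 < r - 1 /\
  forall s, 1 <= s -> s <= t ->
    [/\ (forall u, N s u -> u < r - 2 + s),
        N s (vtx r v0 s.-1),
        count (N s) (iota 0 (r - 2 + s)) = r - 2 &
        (2 <= s -> exists u, [/\ N s u, u <> vtx r v0 s.-1 & ~~ N s.-1 u])].

(* Main.v *)
Require Import Defs.
From mathcomp Require Import all_boot zify.
From Stdlib Require Import Classical.
Set Implicit Arguments. Unset Strict Implicit.

Definition F r t (N : nat -> nat -> bool) s x y :=
  Hgraph r t N x y \/ (x <> y /\ x < r - 1 + s /\ y < r - 1 + s).

Lemma Hsym r t N x y : Hgraph r t N x y -> Hgraph r t N y x.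
Proof.
case=> [[h1 [h2 h3]]|[s [a b [c|c]]]]; first by left; split => //; apply: nesym.
- by right; exists s; split => //; right.
- by right; exists s; split => //; left.
Qed.

Lemma Fsym r t N s x y : F r t N s x y -> F r t N s y x.
Proof. case=> [h|[a [b c]]]; [left; exact: Hsym|right; split; [apply: nesym|split]] => //. Qed.

Lemma lowerN r t v0 N s j z : 2 <= r -> in_family r t v0 N -> s < j ->
  F r t N s (r - 2 + j) z -> z < r - 2 + j -> j <= t /\ N j z.
Proof.
move=> hr [_ hf] hj [[[_ [h1 _]]|[s' [h1 h2 [[e hN]|[e hN]]]]]|[_ [h _]]] hz.
- lia.
- have ? : s' = j by lia.
  by subst.
- have [hi _ _ _] := hf s' h1 h2.
  have := hi _ hN; lia.
- lia.
Qed.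

Lemma seq_max (S : seq nat) : S != [::] ->
  exists2 w, w \in S & forall z, z \in S -> z <= w.
Proof.
elim: S => [//|a S IH] _.
case: S IH => [|b S] IH.
  by exists a; rewrite ?inE // => z; rewrite inE => /eqP ->.
have [w wS hw] := IH isT.
case: (leqP a w) => h.
  exists w; first by rewrite inE wS orbT.
  by move=> z; rewrite inE => /orP [/eqP ->|/hw].
exists a; first by rewrite inE eqxx.
move=> z; rewrite inE => /orP [/eqP ->//|/hw]; lia.
Qed.

Lemma memrem2 (S : seq nat) a b z : uniq S ->
  (z \in rem b (rem a S)) = [&& z != b, z != a & z \in S].
Proof.
move=> u.
rewrite (mem_rem_uniq _ (rem_uniq _ u)) inE (mem_rem_uniq _ u) inE.
by [].
Qed.

Lemma memrem1 (S : seq nat) a z : uniq S ->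
  (z \in rem a S) = (z != a) && (z \in S).
Proof. by move=> u; rewrite (mem_rem_uniq _ u) inE. Qed.

Lemma core r t v0 N s S x y : 4 <= r -> in_family r t v0 N -> s < t ->
  x <> y -> uniq S -> size S = r -> x \in S -> y \in S ->
  (forall a b, a \in S -> b \in S -> a <> b ->
     F r t N s a b \/ (a = x /\ b = y) \/ (a = y /\ b = x)) ->
  (forall z, z \in S -> z <= x) -> r - 1 + s <= x -> F r t N s.+1 x y.
Proof.
move=> hr hfam hst hxy uS szS xS yS hS hmax hx.
have hyx : y < x by have := hmax _ yS; lia.
pose j := x - (r - 2).
have ex : x = r - 2 + j by lia.
case: (ltnP (s.+1) j) => hsj; last first.
  by right; split => //; lia.
pose T := rem y (rem x S).
have sizeT : size T = r - 2.
  rewrite /T size_rem; last by rewrite memrem1 // yS andbT; apply/eqP; apply: nesym.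
  by rewrite size_rem // szS; lia.
have TN z : z \in T -> j <= t /\ N j z /\ z < r - 2 + j.
  rewrite memrem2 // => /and3P [/eqP zy /eqP zx zS].
  have hz : z < x by have := hmax _ zS; lia.
  have : F r t N s x z.
    by case: (hS x z xS zS (nesym zx)) => [//|[[_ ?]|[? _]]].
  rewrite ex => hF.
  have [a b] := lowerN (ltnW (ltnW hr)) hfam (ltnW hsj) hF ltac:(lia).
  by split => //; split => //; lia.
have jt : j <= t.
  have : nth 0 T 0 \in T by apply: mem_nth; lia.
  by move/TN => [].
have [hf1 hf] := hfam.
have [hi hii hiii hiv] := hf j ltac:(lia) jt.
case hNy : (N j y).
  left; right; exists j; split => //; first lia.
  by left.
pose P := filter (N j) (iota 0 (r - 2 + j)).
have TP : {subset T <= P}.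
  move=> z /TN [_ [nz lz]].
  by rewrite mem_filter nz mem_iota; apply/andP; split => //; lia.
have [_ eqTP] := uniq_min_size (rem_uniq _ (rem_uniq _ uS)) TP
  ltac:(rewrite size_filter hiii sizeT; lia).
have [k ek] : exists k, j = k.+2 by exists (j - 2); lia.
rewrite ek /= in hii hiv.
have [u [Nu uneq nNu]] := hiv isT.
rewrite -ek in Nu hii.
have uT : u \in T by rewrite eqTP mem_filter Nu mem_iota; apply/andP; split => //; have := hi _ Nu; lia.
have vT : (r - 2 + k.+1) \in T.
  by rewrite eqTP mem_filter hii mem_iota; apply/andP; split => //; lia.
move: uT vT; rewrite !memrem2 // => /and3P [/eqP uy /eqP ux uS'] /and3P [/eqP vy /eqP vx vS].
have : F r t N s (r - 2 + k.+1) u.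
  case: (hS _ _ vS uS' (nesym uneq)) => [//|[[? _]|[_ ?]]]; lia.
move=> hF.
have uk : u < r - 2 + k.+1.
  have := hi _ Nu; rewrite ek; lia.
have sk : s < k.+1 by rewrite -ltnS -ek.
have [_ ] := lowerN (ltnW (ltnW hr)) hfam sk hF uk.
by rewrite (negbTE nNu).
Qed.

Lemma nomax r t v0 N s S x y w : 4 <= r -> in_family r t v0 N -> s < t ->
  uniq S -> size S = r -> x \in S -> w \in S ->
  (forall a b, a \in S -> b \in S -> a <> b ->
     F r t N s a b \/ (a = x /\ b = y) \/ (a = y /\ b = x)) ->
  (forall z, z \in S -> z <= w) -> r - 1 + s <= w -> w <> x -> w <> y -> False.
Proof.
move=> hr hfam hst uS szS xS wS hS hmax hw wx wy.
pose j := w - (r - 2).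
have ew : w = r - 2 + j by lia.
pose T := rem w S.
have sizeT : size T = r - 1 by rewrite /T size_rem // szS; lia.
have TN z : z \in T -> j <= t /\ N j z /\ z < r - 2 + j.
  rewrite memrem1 // => /andP [/eqP zw zS].
  have hz : z < w by have := hmax _ zS; lia.
  have : F r t N s w z.
    by case: (hS w z wS zS (nesym zw)) => [//|[[? _]|[? _]]].
  rewrite ew => hF.
  have sj : s < j by lia.
  have zj : z < r - 2 + j by lia.
  have [a b] := lowerN (ltnW (ltnW hr)) hfam sj hF zj.
  by split => //; split => //; lia.
have jt : j <= t.
  have : x \in T by rewrite memrem1 // xS andbT; apply/eqP => /esym.
  by move/TN => [].
have [hf1 hf] := hfam.
have [hi hii hiii hiv] := hf j ltac:(lia) jt.
pose P := filter (N j) (iota 0 (r - 2 + j)).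
have TP : {subset T <= P}.
  move=> z /TN [_ [nz lz]].
  by rewrite mem_filter nz mem_iota; apply/andP; split => //; lia.
have := uniq_leq_size (rem_uniq _ uS) TP.
rewrite size_filter hiii sizeT; lia.
Qed.

Lemma upper r t v0 N s x y : 4 <= r -> in_family r t v0 N -> s < t ->
  kr_step r (r - 1 + t) (F r t N s) x y -> F r t N s.+1 x y.
Proof.
move=> hr hfam hst [[h|[a [b c]]]|[hxy [_ [_ [S [[uS szS _ xS yS] hS]]]]]].
- by left.
- by right; split => //; lia.
have [w wS hmax] : exists2 w, w \in S & forall z, z \in S -> z <= w.
  by apply: seq_max; apply/eqP => e; move: szS; rewrite e /=; lia.
case: (ltnP w (r - 1 + s)) => hw.
  right; split => //; have := hmax _ xS; have := hmax _ yS; lia.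
case: (eqVneq w x) => [e|wx].
  by subst w; apply: (core hr hfam hst hxy uS szS xS yS hS hmax hw).
case: (eqVneq w y) => [e|wy].
  subst w; apply: Fsym.
  apply: (core hr hfam hst (nesym hxy) uS szS yS xS _ hmax hw).
  move=> a b aS bS ab; case: (hS a b aS bS ab); tauto.
exfalso; apply: (nomax hr hfam hst uS szS xS wS hS hmax hw); exact/eqP.
Qed.

Lemma kr_sym r n (G : nat -> nat -> Prop) x y : (forall a b, G a b -> G b a) ->
  kr_step r n G x y -> kr_step r n G y x.
Proof.
move=> hG [h|[hxy [hx [hy [S [[uS szS aS xS yS] hS]]]]]].
  by left; apply: hG.
right; split; first by apply: nesym.
split => //; split => //; exists S; split => //.
move=> a b aa bb ab; case: (hS a b aa bb ab); tauto.
Qed.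

Lemma lowcore r t v0 N s x y : 4 <= r -> in_family r t v0 N -> s < t ->
  x = r - 1 + s -> y < r - 1 + s -> kr_step r (r - 1 + t) (F r t N s) x y.
Proof.
move=> hr [hf1 hf] hst ex hy.
have [hi hii hiii hiv] := hf s.+1 isT hst.
have ex' : x = r - 2 + s.+1 by lia.
case hNy : (N s.+1 y).
  by left; left; right; exists s.+1; split => //; left.
pose P := filter (N s.+1) (iota 0 (r - 2 + s.+1)).
have Pl z : z \in P -> z < r - 1 + s /\ N s.+1 z.
  by rewrite mem_filter mem_iota => /andP [nz /andP [_ lz]]; split => //; lia.
right; split; first lia.
split; first lia.
split; first lia.
exists [:: y, x & P]; split.
  split => //.
  - rewrite /= inE negb_or; apply/andP; split; first (apply/andP; split).
    + apply/eqP; lia.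
    + by apply/negP => /Pl [_]; rewrite hNy.
    + apply/andP; split; first by apply/negP => /Pl [? _]; lia.
      by rewrite filter_uniq // iota_uniq.
  - by rewrite /= size_filter hiii; lia.
  - rewrite /= ; apply/and3P; split; try (apply/ltP; lia).
    by apply/allP => z /Pl [? _]; lia.
  - by rewrite !inE eqxx orbT.
  - by rewrite !inE eqxx.
have Fin a b : a <> b -> a < r - 1 + s -> b < r - 1 + s -> F r t N s a b.
  by move=> *; right.
move=> a b; rewrite !inE => /orP [/eqP ->|/orP [/eqP ->|aP]]
                          /orP [/eqP ->|/orP [/eqP ->|bP]] ab //.
- by right; right.
- by left; apply: Fin => //; have [? _] := Pl _ bP.
- by right; left.
- by left; left; right; exists s.+1; split => //; left; split => //; have [_ ?] := Pl _ bP.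
- by left; apply: Fin => //; have [? _] := Pl _ aP.
- by left; left; right; exists s.+1; split => //; right; split => //; have [_ ?] := Pl _ aP.
- by left; apply: Fin => //; [have [? _] := Pl _ aP|have [? _] := Pl _ bP].
Qed.

Lemma lower r t v0 N s x y : 4 <= r -> in_family r t v0 N -> s < t ->
  F r t N s.+1 x y -> kr_step r (r - 1 + t) (F r t N s) x y.
Proof.
move=> hr hfam hst [h|[hxy [hx hy]]].
  by left; left.
case: (ltnP x (r - 1 + s)) => hx'.
  case: (ltnP y (r - 1 + s)) => hy'.
    by left; right.
  apply: kr_sym; first by move=> ??; apply: Fsym.
  apply: (lowcore hr hfam hst); lia.
apply: (lowcore hr hfam hst); lia.
Qed.

Lemma kr_mono r n (G G' : nat -> nat -> Prop) x y : (forall a b, G a b -> G' a b) ->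
  kr_step r n G x y -> kr_step r n G' x y.
Proof.
move=> hG [h|[hxy [hx [hy [S [hS1 hS]]]]]]; first by left; apply: hG.
right; do 3 (split => //); exists S; split => //.
move=> a b aa bb ab; case: (hS a b aa bb ab); [left; exact: hG|tauto].
Qed.

Lemma equiv r t v0 N : 4 <= r -> in_family r t v0 N ->
  forall s, s <= t -> forall x y,
   kr_boot r (r - 1 + t) (Hgraph r t N) s x y <-> F r t N s x y.
Proof.
move=> hr hfam; elim=> [|s IH] hs x y /=.
  split; first by left.
  case=> [//|[a [b c]]]; left; split => //; lia.
split.
  move=> h; apply: (upper hr hfam hs).
  by apply: kr_mono h => a b /(IH (ltnW hs)).
move=> h; apply: kr_mono (lower hr hfam hs h) => a b /(IH (ltnW hs)); done.
Qed.

Unset Implicit Arguments. Set Strict Implicit.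
Theorem proposition1 (r t v0 : nat) (N : nat -> nat -> bool) :
  4 <= r -> 1 <= t -> in_family r t v0 N ->
  let n := r - 1 + t in
  let G := kr_boot r n (Hgraph r t N) in
  (* (a): u in V_{t-2} (empty when t = 1), i.e. t >= 2 and u < r - 3 + t *)
  (forall u, 2 <= t -> u < r - 3 + t ->
     Hgraph r t N u (vtx r v0 t) \/
     (G t u (vtx r v0 t) /\ ~ G t.-1 u (vtx r v0 t))) /\
  (* (b): V_s = {0,..,r-2+s} is a clique in <H_t>_s *)
  (forall s, s <= t -> forall x y, x <> y -> x < r - 1 + s -> y < r - 1 + s ->
     G s x y).
Proof.
move=> hr ht hfam n G.
have hb : forall s, s <= t -> forall x y, x <> y -> x < r - 1 + s -> y < r - 1 + s ->
     G s x y.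
  by move=> s hs x y hxy hx hy; apply/(equiv hr hfam hs); right.
split=> // u h2 hu.
have [k ek] : exists k, t = k.+1 by exists t.-1; lia.
have hv : vtx r v0 t = r - 2 + t by rewrite ek.
rewrite hv.
case: (classic (Hgraph r t N u (r - 2 + t))) => hH; first by left.
right; split.
  apply: hb => //; lia.
have ht1 : t.-1 <= t by lia.
move/(equiv hr hfam ht1) => [//|[_ [_ h]]]; lia.
Qed.
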